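(* Let $\Gamma$ be a convex digital polygon and let $[V_kV_{k+1}]$ be a supporting edge of slope $a/b$ made of $f$ patterns $(a,b)$, and let $MS$ be the unique maximal segment containing it. Then \[ \mathcal{L}^1(V_kV_{k+1})\le\mathcal{L}^1(MS)\le\frac{f+2}{f}\,\mathcal{L}^1(V_kV_{k+1})-2 \quad\text{and}\quad \tfrac13\mathcal{L}^1(MS)\le\mathcal{L}^1(V_kV_{k+1})\le\mathcal{L}^1(MS)\le 3\,\mathcal{L}^1(V_kV_{k+1}). \]
   Context: A standard line with slope $a/b$ and shift $\mu$ ($\gcd(a,b)=1$) is $\{(x,y)\in\mathbb{Z}^2:\mu\le ax-by<\mu+|a|+|b|\}$; upper leaning points have $ax-by=\mu$, lower leaning points $ax-by=\mu+|a|+|b|-1$. A pattern $(a,b)$ is the Freeman word between two consecutive upper leaning points. A convex digital polygon (CDP) is a finite $\Gamma\subset\mathbb{Z}^2$ with $\Gamma=\mathrm{Conv}(\Gamma)\cap\mathbb{Z}^2$; vertices $V_1,\dots,V_e$ (cyclic) form the minimal subset whose convex hull digitizes to $\Gamma$; the boundary points form a closed 4-connected contour through the vertices; the digital edge $[V_kV_{k+1}]$ is the contour portion from $V_k$ to $V_{k+1}$. A set of consecutive contour points is a DSS if it lies in a standard line; its leaning points are those of its characteristic line (the containing standard line with minimal $|a|+|b|$). A maximal segment is a DSS not extendable at either end by a contour point. A supporting edge is a digital edge whose two vertices are the leftmost and rightmost upper leaning points of some maximal segment. $\mathcal{L}^1$ is the number of unit steps (city-block length). First-octant conventions, polygon on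 the side of lower leaning points; other octants by symmetry. *)

(* Defs.v *)
From mathcomp Require Import all_boot all_order all_algebra.
Unset Printing Implicit Defensive.
Import Order.TTheory GRing.Theory Num.Theory.
Local Open Scope ring_scope.

Definition point := (int * int)%type.

(* p (an integer point) lies in the (real) convex hull of the finite set S.
   For integer points it is equivalent to ask for rational coefficients. *)
Definition in_hull (S : seq point) (p : point) : Prop :=
  exists w : 'I_(size S) -> rat,
    (forall i, 0 <= w i) /\ \sum_i w i = 1 /\
    \sum_i w i * ((nth (0, 0) S i).1)%:~R = (p.1)%:~R /\
    \sum_i w i * ((nth (0, 0) S i).2)%:~R = (p.2)%:~R.

Definition convex_digital_polygon (G : seq point) : Prop :=
  forall p : point, in_hull G p -> p \in G.

Definition digitizes_to (S G : seq point) : Prop :=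
  forall p : point, in_hull S p <-> p \in G.

Definition vertex_set (G Vs : seq point) : Prop :=
  {subset Vs <= G} /\ digitizes_to Vs G /\
  forall S : seq point, {subset S <= Vs} -> digitizes_to S G -> {subset Vs <= S}.

Definition neighbours8 (p : point) : seq point :=
  [:: (p.1 + 1, p.2); (p.1 - 1, p.2); (p.1, p.2 + 1); (p.1, p.2 - 1);
      (p.1 + 1, p.2 + 1); (p.1 + 1, p.2 - 1); (p.1 - 1, p.2 + 1);
      (p.1 - 1, p.2 - 1)].

Definition boundary (G : seq point) (p : point) : bool :=
  (p \in G) && has (fun q => q \notin G) (neighbours8 p).

Definition adj4 (p q : point) : bool :=
  (`|p.1 - q.1| + `|p.2 - q.2| == 1)%R.

Definition cnth (c : seq point) (j : nat) : point :=
  nth (0, 0) c (j %% size c)%N.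

Definition shoelace (c : seq point) : int :=
  \sum_(j < size c) ((cnth c j).1 * (cnth c j.+1).2 - (cnth c j.+1).1 * (cnth c j).2).

(* c is the closed 4-connected contour of Gamma: a cyclic sequence of
   pairwise distinct points, consecutive points 4-adjacent, whose points
   are exactly the boundary points of Gamma; it is traversed clockwise,
   so that (first-octant convention) the polygon lies on the side of the
   lower leaning points. *)
Definition contour (G c : seq point) : Prop :=
  uniq c /\ (forall p, (p \in c) = boundary G p) /\
  (forall j, (j < size c)%N -> adj4 (cnth c j) (cnth c j.+1)) /\
  shoelace c < 0.

Definition contour_arc (c : seq point) (i l : nat) : seq point :=
  [seq cnth c (i + j) | j <- iota 0 l.+1].

(* L^1 length of the arc (i, l) is l. *)

Definition digital_edge (Vs c : seq point) (i m : nat) : Prop :=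
  (0 < m < size c)%N /\ cnth c i \in Vs /\ cnth c (i + m) \in Vs /\
  forall j, (0 < j < m)%N -> cnth c (i + j) \notin Vs.

Definition in_std (a b mu : int) (p : point) : bool :=
  (mu <= a * p.1 - b * p.2) && (a * p.1 - b * p.2 < mu + `|a| + `|b|).

Definition upper_leaning (a b mu : int) (p : point) : bool :=
  a * p.1 - b * p.2 == mu.

Definition lower_leaning (a b mu : int) (p : point) : bool :=
  a * p.1 - b * p.2 == mu + `|a| + `|b| - 1.

Definition is_dss (c : seq point) (i l : nat) : Prop :=
  (l < size c)%N /\
  exists a b mu : int, coprimez a b /\ all (in_std a b mu) (contour_arc c i l).

(* not extendable at either end by a contour point *)
Definition maximal_segment (c : seq point) (i l : nat) : Prop :=
  is_dss c i l /\ ~ is_dss c (i + (size c).-1) l.+1 /\ ~ is_dss c i l.+1.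

(* (a, b, mu) is the characteristic line of the DSS (i, l): a containing
   standard line with minimal |a|+|b|, its sign being chosen so that the
   traversal direction of the contour is that of (b, a) (this realises the
   convention "polygon on the side of the lower leaning points" since the
   contour is clockwise). *)
Definition char_line (c : seq point) (i l : nat) (a b mu : int) : Prop :=
  coprimez a b /\ all (in_std a b mu) (contour_arc c i l) /\
  (forall j, (j < l)%N ->
     0 <= b * ((cnth c (i + j).+1).1 - (cnth c (i + j)).1)
          + a * ((cnth c (i + j).+1).2 - (cnth c (i + j)).2)) /\
  (forall a' b' mu' : int, coprimez a' b' -> all (in_std a' b' mu') (contour_arc c i l) ->
     `|a| + `|b| <= `|a'| + `|b'|).

Definition supporting_edge_of (c : seq point) (i m s l : nat) (a b mu : int) : Prop :=
  maximal_segment c s l /\ char_line c s l a b mu /\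
  exists d : nat, (d + m <= l)%N /\ ((s + d) %% size c = i %% size c)%N /\
    upper_leaning a b mu (cnth c (s + d)) /\
    upper_leaning a b mu (cnth c (s + d + m)) /\
    forall j, (j <= l)%N -> upper_leaning a b mu (cnth c (s + j)) ->
      (d <= j <= d + m)%N.

(* Main.v *)
Require Import Defs.
From mathcomp Require Import all_boot all_order all_algebra zify ring lra.
Import Order.TTheory GRing.Theory Num.Theory.
Local Open Scope ring_scope.

Lemma adj_cases (dx dy : int) : `|dx| + `|dy| = 1 ->
  (dx = 1 /\ dy = 0) \/ (dx = -1 /\ dy = 0) \/ (dx = 0 /\ dy = 1) \/ (dx = 0 /\ dy = -1).
Proof. intros; lia. Qed.

Definition pn (a b : int) : nat := if (0 <= a) == (0 <= b) then `|a|%N else `|b|%N.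

Lemma step_int (a b dx dy w w' : int) :
  `|dx| + `|dy| = 1 -> 0 <= b*dx + a*dy ->
  0 <= w < `|a| + `|b| -> 0 <= w' < `|a| + `|b| -> w' = w + (a*dx - b*dy) ->
  w' = w + (pn a b)%:Z \/ w' = w + (pn a b)%:Z - (`|a| + `|b|).
Proof.
move=> /adj_cases H Hd Hw Hw' E; rewrite /pn.
case Ea: (0 <= a); case Eb: (0 <= b) => /=;
case: H => [[-> ->]|[[-> ->]|[[-> ->]|[-> ->]]]] in Hd E *; lia.
Qed.

Lemma period (W : nat -> nat) (P p l : nat) :
  (forall j, (j <= l)%N -> (W j < P)%N) ->
  (forall j, (j < l)%N -> W j.+1 = (W j + p)%N \/ (W j.+1 + P = W j + p)%N) ->
  forall j k, (j + k <= l)%N -> W (j + k)%N = ((W j + k * p) %% P)%N.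
Proof.
move=> Hlt Hs j; elim=> [|k IH] Hk.
  by rewrite addn0 mul0n addn0 modn_small // Hlt // -(addn0 j).
have Hk' : (j + k <= l)%N by lia.
have -> : (W j + k.+1 * p = (W j + k * p) + p)%N by rewrite mulSn; lia.
rewrite -modnDml -IH // addnS.
have HL := Hlt (j + k).+1 ltac:(lia).
case: (Hs (j+k)%N ltac:(lia)) => E.
  by rewrite -E modn_small.
by rewrite -E modnDr modn_small.
Qed.

Lemma count_mult (P p m : nat) : (0 < P)%N -> coprime P p ->
  count (fun k => (k * p) %% P == 0)%N (iota 0 m.+1) = (m %/ P + 1)%N.
Proof.
move=> HP Hc; elim: m => [|m IH].
  by rewrite /= mul0n mod0n div0n.
rewrite -addn1 iotaD count_cat IH /= add0n addn0 divnS //.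
have -> : ((m.+1 * p) %% P == 0)%N = (P %| m.+1)%N by rewrite -/(dvdn P _) Gauss_dvdl.
lia.
Qed.

Theorem proposition4 (G Vs c : seq point) (i m s l f : nat) (a b mu : int) :
  convex_digital_polygon G ->
  vertex_set G Vs ->
  contour G c ->
  digital_edge Vs c i m ->
  supporting_edge_of c i m s l a b mu ->
  count (upper_leaning a b mu) (contour_arc c i m) = f.+1 ->
  let L1e : rat := m%:R in
  let L1ms : rat := l%:R in
  [/\ L1e <= L1ms,
      L1ms <= (f%:R + 2) / f%:R * L1e - 2,
      L1ms / 3 <= L1e,
      L1e <= L1ms &
      L1ms <= 3 * L1e].
Proof.
move=> _ _ [_ [_ [Hadj _]]] [Hm _]
  [_ [[Hcop [Hstd [Hdir _]]] [d [Hdm [Hsd [Hul1 [Hul2 Hlr]]]]]]] Hcnt.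
set n := size c in Hm Hadj Hsd.
have Hn : (0 < n)%N by lia.
have cmod : forall k, cnth c (k %% n) = cnth c k by move=> k; rewrite /cnth modn_mod.
pose v j := a * (cnth c (s + j)).1 - b * (cnth c (s + j)).2.
have F1 : forall j, (j <= l)%N -> mu <= v j < mu + `|a| + `|b|.
  move=> j hj; have := allP Hstd (cnth c (s + j)).
  apply; apply/mapP; exists j => //; rewrite mem_iota; lia.
have F2 : forall j, (j < l)%N -> adj4 (cnth c (s + j)) (cnth c (s + j).+1).
  move=> j hj; have := Hadj ((s + j) %% n)%N (ltn_pmod _ Hn).
  rewrite cmod; congr adj4; rewrite /cnth -/n; congr nth.
  by rewrite -addn1 modnDml addn1.
pose W j := `|v j - mu|%N.
pose Pn := (`|a| + `|b|)%N.
have HW : forall j, (j <= l)%N -> (W j < Pn)%N.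
  move=> j /F1; rewrite /W /Pn; lia.
have HS : forall j, (j < l)%N -> W j.+1 = (W j + pn a b)%N \/ (W j.+1 + Pn = W j + pn a b)%N.
  move=> j hj.
  set p0 := cnth c (s + j); set p1 := cnth c (s + j).+1.
  move: (F2 j hj); rewrite -/p0 -/p1 /adj4 => /eqP H1.
  have H1' : `|p1.1 - p0.1| + `|p1.2 - p0.2| = 1.
    by rewrite -H1 -(distrC p0.1) -(distrC p0.2).
  have h3 := Hdir j hj. rewrite -/p0 -/p1 in h3.
  have h1 := F1 j ltac:(lia). have h2 := F1 j.+1 hj.
  have E : v j.+1 - mu = v j - mu + (a * (p1.1 - p0.1) - b * (p1.2 - p0.2)).
    rewrite /v addnS -/p0 -/p1; ring.
  have := @step_int a b _ _ (v j - mu) (v j.+1 - mu) H1' h3 ltac:(lia) ltac:(lia) E.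
  rewrite /W /Pn; lia.
have Per := @period W Pn (pn a b) l HW HS.
have UL : forall j, upper_leaning a b mu (cnth c (s + j)) = (W j == 0)%N.
  by move=> j; rewrite /W absz_eq0 subr_eq0.
have Wd : W d = 0%N by apply/eqP; rewrite -UL.
have Wdm : W (d + m)%N = 0%N by apply/eqP; rewrite -UL addnA.
have HP : (0 < Pn)%N by have := HW d ltac:(lia); lia.
have Hcop' : coprime Pn (pn a b).
  rewrite coprimezE in Hcop; rewrite /Pn /pn; case: ifP => _; rewrite /coprime.
    by rewrite gcdnC gcdnDl.
  by rewrite gcdnC gcdnDr gcdnC.
rewrite /contour_arc count_map in Hcnt.
have : count (fun k => (k * pn a b) %% Pn == 0)%N (iota 0 m.+1) = f.+1.
  rewrite -Hcnt; apply: eq_in_count => k; rewrite mem_iota => hk /=.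
  have -> : cnth c (i + k) = cnth c (s + (d + k)).
    by rewrite /cnth -/n; congr nth; rewrite addnA -modnDml -Hsd modnDml.
  by rewrite UL Per ?Wd ?add0n //; lia.
rewrite count_mult // => Hf.
have Wdm' := Wdm; rewrite Per // Wd add0n in Wdm'.
have Pm : (Pn %| m)%N by rewrite -(Gauss_dvdl _ Hcop') /dvdn Wdm'.
have Hm1 : m = (f * Pn)%N by rewrite -(divnK Pm); congr (_ * _)%N; lia.
have Hd : (d < Pn)%N.
  case: (ltnP d Pn) => // hd; exfalso.
  have := Per (d - Pn)%N Pn ltac:(lia).
  rewrite subnK // Wd addnC mulnC modnMDl modn_small; last by apply: HW; lia.
  move=> /esym /eqP; rewrite -UL => /(Hlr (d - Pn)%N ltac:(lia)) /andP [h _]; lia.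
have Hl : (l < d + m + Pn)%N.
  case: (ltnP l (d + m + Pn)) => // hd; exfalso.
  have := Per (d + m)%N Pn ltac:(lia).
  rewrite Wdm add0n mulnC modnMl => /eqP; rewrite -UL => /(Hlr _ hd) /andP [_ h]; lia.
have hf : (0 < f)%N by move: Hm1; lia.
have n1 : (m%:R <= l%:R :> rat) by rewrite ler_nat; lia.
have hPm : (Pn <= m)%N by rewrite Hm1 leq_pmull.
have n2 : ((l + 2)%N%:R <= ((f + 2) * Pn)%N%:R :> rat) by rewrite ler_nat mulnDl -Hm1; lia.
have n3 : (l%:R <= (3 * m)%N%:R :> rat) by rewrite ler_nat; lia.
rewrite natrM in n3; rewrite natrD natrM natrD in n2.
have fz : (f%:R != 0 :> rat) by rewrite pnatr_eq0; lia.
split => //; last by lra.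
  have -> : (f%:R + 2) / f%:R * m%:R = (f%:R + 2) * Pn%:R :> rat.
    by rewrite Hm1 natrM; field.
  lra.
Qed.
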